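(* Let $K$ be a ramified quadratic extension of $\mathbb{Q}_2$, $d=2m$ with $m$ odd, $m\ge3$, and $f=a_1x_1^d+\dots+a_sx_s^d$ with all $a_i\in\mathcal{O}\setminus\{0\}$. Suppose $s\ge\frac{7}{5}d$, $f$ is normalized, and $f$ has at least five variables at level $0$. Then $f$ has a nontrivial zero in $K$. If $K\in\{\mathbb{Q}_2(\sqrt{-1}),\mathbb{Q}_2(\sqrt{-5})\}$, the same conclusion holds with the assumption $s\ge\frac75 d$ replaced by $s\ge d+1$.
   Context: $\mathcal{O}$ is the ring of integers of $K$ and $\pi$ the uniformizer: $\pi=\sqrt{2},\sqrt{-2},\sqrt{10},\sqrt{-10},1+\sqrt{-1},1+\sqrt{-5}$ for $K=\mathbb{Q}_2(\sqrt2),\mathbb{Q}_2(\sqrt{-2}),\mathbb{Q}_2(\sqrt{10}),\mathbb{Q}_2(\sqrt{-10}),\mathbb{Q}_2(\sqrt{-1}),\mathbb{Q}_2(\sqrt{-5})$ respectively. Each unit $u$ has a unique expansion $u=c_0+c_1\pi+c_2\pi^2+\cdots$ with $c_j\in\{0,1\}$, $c_0=1$. Writing $a_i=\pi^r u$ with $u$ a unit, the variable $x_i$ is at level $r\bmod d$ (levels are residues in $\{0,\dots,d-1\}$), and its $\pi$-coefficient is $c_1$ of $u$. Let $s_j$ be the number of variables at level $j$. The form is normalized if $s_0+s_1+\dots+s_j\ge \frac{(j+1)s}{d}$ for every $j=0,1,\dots,d-1$. A nontrivial zero is a point of $K^s$, not all coordinates zero, where $f$ vanishes. *)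

(* Defs.v *)
From mathcomp Require Import all_boot all_algebra.
Set Implicit Arguments. Unset Strict Implicit. Unset Printing Implicit Defensive.
Import GRing.Theory Num.Theory.
Local Open Scope ring_scope.

Inductive ramfield := Q2_s2 | Q2_sm2 | Q2_s10 | Q2_sm10 | Q2_sm1 | Q2_sm5.

(* K = Q_2(sqrt (Dof K)) *)
Definition Dof (K : ramfield) : int :=
  match K with
  | Q2_s2 => 2 | Q2_sm2 => -2 | Q2_s10 => 10 | Q2_sm10 => -10
  | Q2_sm1 => -1 | Q2_sm5 => -5 end.

(* Elements of Z[sqrt D] as pairs (x, y) = x + y sqrt D. *)
Definition zq := (int * int)%type.
Definition zq0 : zq := (0, 0).
Definition zq1 : zq := (1, 0).
Definition zqadd (x y : zq) : zq := (x.1 + y.1, x.2 + y.2).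
Definition zqmul (D : int) (x y : zq) : zq :=
  (x.1 * y.1 + D * (x.2 * y.2), x.1 * y.2 + x.2 * y.1).
Definition zqpow (D : int) (x : zq) (n : nat) : zq := iter n (zqmul D x) zq1.

(* The uniformizer pi of K, as given in the paper. *)
Definition piof (K : ramfield) : zq :=
  match K with
  | Q2_s2 | Q2_sm2 | Q2_s10 | Q2_sm10 => (0, 1)
  | Q2_sm1 | Q2_sm5 => (1, 1)
  end.

Definition zqcong (n : nat) (x y : zq) : Prop :=
  ((2 ^ n)%N%:Z %| x.1 - y.1)%Z /\ ((2 ^ n)%N%:Z %| x.2 - y.2)%Z.

(* An element of O = Z_2[sqrt D] (as a set, Z_2 x Z_2) is a compatible
   system of approximations modulo 2^n (inverse limit of Z[sqrt D]/2^n). *)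
Record Oel := MkOel {
  oseq : nat -> zq ;
  ocompat : forall n k, (n <= k)%N -> zqcong n (oseq k) (oseq n) }.

Definition Oeq (x y : Oel) : Prop := forall n, zqcong n (oseq x n) (oseq y n).
Definition Ozero (x : Oel) : Prop := forall n, zqcong n (oseq x n) zq0.

Definition Ounit (K : ramfield) (u : Oel) : Prop :=
  exists v : Oel, forall n, zqcong n (zqmul (Dof K) (oseq u n) (oseq v n)) zq1.

Definition Odecomp (K : ramfield) (a : Oel) (r : nat) (u : Oel) : Prop :=
  forall n, zqcong n (oseq a n) (zqmul (Dof K) (zqpow (Dof K) (piof K) r) (oseq u n)).

(* An element of K is represented as x / 2^k with x in O, k : nat
   (every element of K has this form).  It is zero iff x = 0 in O.
   For y_i = x_i / 2^(k_i) and M = max k_i,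
   2^(d M) * f(y) = sum_i a_i x_i^d 2^(d (M - k_i)), so
   f(y) = 0 in K iff this element of O vanishes. *)
Definition diag_eval (K : ramfield) (s d : nat) (a x : 'I_s -> Oel)
    (k : 'I_s -> nat) (n : nat) : zq :=
  let M := (\max_(i < s) k i)%N in
  \big[zqadd/zq0]_(i < s)
     zqmul (Dof K) (oseq (a i) n)
       (zqmul (Dof K) (zqpow (Dof K) (oseq (x i) n) d)
                      ((2 ^ (d * (M - k i)))%N%:Z, 0)).

Definition has_nontrivial_zero (K : ramfield) (s d : nat) (a : 'I_s -> Oel) :=
  exists (x : 'I_s -> Oel) (k : 'I_s -> nat),
    (exists i, ~ Ozero (x i)) /\
    (forall n, zqcong n (diag_eval K d a x k n) zq0).

(* Levels: r i is the pi-adic valuation of a_i; level of x_i is r i mod d. *)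
Definition level_count (s d : nat) (r : 'I_s -> nat) (j : nat) : nat :=
  #|[set i : 'I_s | (r i %% d == j)%N]|.

Definition normalized (s d : nat) (r : 'I_s -> nat) : Prop :=
  forall j : nat, (j < d)%N ->
    (j.+1 * s <= d * \sum_(l < j.+1) level_count d r l)%N.

(* Main.v *)
From HB Require Import structures.
Require Import Defs.
From mathcomp Require Import all_boot all_algebra ring zify.
From Stdlib Require Import ClassicalEpsilon.
Set Implicit Arguments. Unset Strict Implicit. Unset Printing Implicit Defensive.
Import GRing.Theory Num.Theory.
Local Open Scope ring_scope.

Definition zr (D : int) : Type := zq.
HB.instance Definition _ (D : int) := GRing.Zmodule.on (zr D).
Section R.
Variable D : int.
Lemma zmulA : associative (zqmul D : zr D -> zr D -> zr D).
Proof. by move=> [a b] [c e] [f g]; rewrite /zqmul /=; congr pair; ring. Qed.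
Lemma zmulC : commutative (zqmul D : zr D -> zr D -> zr D).
Proof. by move=> [a b] [c e]; rewrite /zqmul /=; congr pair; ring. Qed.
Lemma zmul1 : left_id (zq1 : zr D) (zqmul D).
Proof. by move=> [a b]; rewrite /zqmul /=; congr pair; ring. Qed.
Lemma zmulDl : left_distributive (zqmul D : zr D -> zr D -> zr D) +%R.
Proof. by move=> [a b] [c e] [f g]; rewrite /zqmul /=; apply: (f_equal2 pair); rewrite /=; ring. Qed.
Lemma zone : (zq1 : zr D) != 0.
Proof. by []. Qed.
End R.
HB.instance Definition _ (D : int) := GRing.Zmodule_isComNzRing.Build (zr D)
  (@zmulA D) (@zmulC D) (@zmul1 D) (@zmulDl D) (@zone D).

Section Basics.
Variable D : int.
Local Notation R := (zr D).
Lemma zmulE (x y : R) : x * y = ((x.1 * y.1 + D * (x.2 * y.2))%R, (x.1 * y.2 + x.2 * y.1)%R).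
Proof. by []. Qed.
Lemma zaddE (x y : R) : x + y = ((x.1 + y.1)%R, (x.2 + y.2)%R).
Proof. by []. Qed.
Lemma zoppE (x : R) : - x = ((- x.1)%R, (- x.2)%R).
Proof. by []. Qed.
Lemma zsubE (x y : R) : x - y = ((x.1 - y.1)%R, (x.2 - y.2)%R).
Proof. by []. Qed.
Lemma z0E : (0 : R) = (0%R, 0%R). Proof. by []. Qed.
Lemma z1E : (1 : R) = (1%R, 0%R). Proof. by []. Qed.
Lemma znatE (n : nat) : (n%:R : R) = (n%:Z, 0%R).
Proof.
elim: n => [|n IH]; first by [].
rewrite mulrS IH zaddE /= addr0; congr pair; lia.
Qed.
Lemma zpowE (x : zq) n : zqpow D x n = ((x : R) ^+ n).
Proof. by elim: n => [|n IH] //=; rewrite exprS IH. Qed.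

Definition dv (n : nat) (x : R) := exists y : R, x = (2 ^ n)%N%:R * y.

Lemma dvP n (x : R) : dv n x <-> ((2 ^ n)%N%:Z %| x.1)%Z /\ ((2 ^ n)%N%:Z %| x.2)%Z.
Proof.
split.
  move=> [y ->]; rewrite znatE zmulE /= mul0r mulr0 !addr0.
  by rewrite mul0r addr0; split; apply: dvdz_mulr.
case: x => [a b] /= [/dvdzP [q1 ->] /dvdzP [q2 ->]].
by exists (q1, q2); rewrite znatE zmulE /=; congr pair; ring.
Qed.

Lemma zqcong_dv n (x y : zq) : zqcong n x y <-> dv n ((x : R) - (y : R)).
Proof. by rewrite dvP. Qed.

Lemma dv0 (x : R) : dv 0 x. Proof. by exists x; rewrite mul1r. Qed.
Lemma dv_0 n : dv n (0 : R). Proof. by exists 0; rewrite mulr0. Qed.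
Lemma dvD n (x y : R) : dv n x -> dv n y -> dv n (x + y).
Proof. by move=> [a ->] [b ->]; exists (a + b); rewrite mulrDr. Qed.
Lemma dvN n (x : R) : dv n x -> dv n (- x).
Proof. by move=> [a ->]; exists (- a); rewrite mulrN. Qed.
Lemma dvB n (x y : R) : dv n x -> dv n y -> dv n (x - y).
Proof. by move=> hx hy; apply: dvD => //; apply: dvN. Qed.
Lemma dvM n (x y : R) : dv n x -> dv n (x * y).
Proof. by move=> [a ->]; exists (a * y); rewrite mulrA. Qed.
Lemma dvMl n (x y : R) : dv n y -> dv n (x * y).
Proof. by rewrite mulrC; apply: dvM. Qed.
Lemma dv_le m n (x : R) : (m <= n)%N -> dv n x -> dv m x.
Proof.
move=> le [a ->]; exists ((2 ^ (n - m))%N%:R * a).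
by rewrite mulrA -natrM -expnD subnKC.
Qed.
Lemma dv_mul m n (x y : R) : dv m x -> dv n y -> dv (m + n) (x * y).
Proof.
move=> [a ->] [b ->]; exists (a * b).
by rewrite expnD natrM; ring.
Qed.
Lemma dv_2pow n (x : R) : dv n ((2 ^ n)%N%:R * x).
Proof. by exists x. Qed.
Lemma dv_cancel n (x y : R) : (2 ^ n)%N%:R * x = (2 ^ n)%N%:R * y -> x = y.
Proof.
case: x y => [a b] [c e]; rewrite !znatE !zmulE /= !mul0r !mulr0 !addr0.
have h : (2 ^ n)%N%:Z != 0 by rewrite eqz_nat expn_eq0.
by case=> /(mulfI h) -> /(mulfI h) ->.
Qed.
End Basics.

Lemma par (x : int) : exists k : int, (x = 2 * k \/ x = 2 * k + 1)%R.
Proof. exists (x %/ 2)%Z. have := divz_eq x 2. have := modz_ge0 x (isT : (2:int) != 0). have := ltz_pmod x (isT : (0 < (2:int))%R). lia. Qed.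

Definition sqt (K : ramfield) : bool :=
  match K with Q2_sm1 | Q2_sm5 => false | _ => true end.
Definition etaK (K : ramfield) : zq :=
  match K with
  | Q2_s2 => (1, 0) | Q2_sm2 => (-1, 0) | Q2_s10 => (5, 0) | Q2_sm10 => (-5, 0)
  | Q2_sm1 => (0, 1) | Q2_sm5 => (-2, 1) end.

Definition inP (K : ramfield) (x : zr (Dof K)) :=
  exists a b : zr (Dof K), x = (piof K : zr (Dof K)) * a + 2%:R * b.

Section Ideal.
Variable K : ramfield.
Local Notation R := (zr (Dof K)).
Local Notation pi := (piof K : R).
Local Notation eta := (etaK K : R).
Local Notation dv := (@dv (Dof K)).
Local Notation inP := (@inP K).

Lemma inP_coord (x : R) :
  inP x <-> exists k : int, (if sqt K then x.1 else x.1 - x.2) = 2 * k.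
Proof.
case: x => [x1 x2]; split.
  move=> [[a1 a2] [[b1 b2] E]]; move: E; rewrite znatE zmulE zaddE /=.
  case: K => /= [] [E1 E2];
  by [exists (a2 + b1) ; lia| exists (-a2 + b1); lia | exists (5 * a2 + b1); lia
     | exists (-5 * a2 + b1); lia | exists (- a2 + b1 - b2); lia | exists (- 3 * a2 + b1 - b2); lia].
move=> [k hk]; move: hk; case: K => /= hk;
  by exists (x2, 0), (k, 0); rewrite znatE zmulE zaddE /=; congr pair; lia.
Qed.

Lemma pi2 : pi * pi = 2%:R * eta.
Proof. by case: K. Qed.

Lemma inPD x y : inP x -> inP y -> inP (x + y).
Proof. by move=> [a [b ->]] [a' [b' ->]]; exists (a + a'), (b + b'); ring. Qed.
Lemma inPN x : inP x -> inP (- x).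
Proof. by move=> [a [b ->]]; exists (- a), (- b); ring. Qed.
Lemma inPB x y : inP x -> inP y -> inP (x - y).
Proof. by move=> hx hy; apply: inPD => //; apply: inPN. Qed.
Lemma inPM x y : inP x -> inP (x * y).
Proof. by move=> [a [b ->]]; exists (a * y), (b * y); ring. Qed.
Lemma inPMl x y : inP y -> inP (x * y).
Proof. by rewrite mulrC; apply: inPM. Qed.
Lemma inP_pi : inP pi.
Proof. by exists 1, 0; ring. Qed.
Lemma inP2 y : inP (2%:R * y).
Proof. by exists 0, y; ring. Qed.
Lemma inP0 : inP 0.
Proof. by exists 0, 0; ring. Qed.
Lemma inP_sq x y : inP x -> inP y -> dv 1 (x * y).
Proof.
move=> [a [b ->]] [a' [b' ->]].
exists (eta * a * a' + pi * a * b' + b * pi * a' + 2%:R * b * b').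
have -> : ((2 ^ 1)%N%:R : R) = 2%:R by [].
have E : (pi * a + 2%:R * b) * (pi * a' + 2%:R * b') =
   (pi * pi) * a * a' + 2%:R * (pi * a * b' + b * pi * a' + 2%:R * b * b') by ring.
by rewrite E pi2; ring.
Qed.
Lemma dv1_inP x : dv 1 x -> inP x.
Proof. by move=> [y ->]; apply: inP2. Qed.

Lemma Res0 x : inP x \/ inP (x - 1).
Proof.
rewrite !inP_coord zsubE z1E /=; case: x => [x1 x2] /=.
case: (sqt K).
  by case: (par x1) => k [] E; [left | right]; exists k; lia.
by case: (par (x1 - x2)) => k [] E; [left | right]; exists k; lia.
Qed.

Lemma Res1 x : inP x -> dv 1 x \/ dv 1 (x - pi).
Proof.
rewrite inP_coord !dvP zsubE; case: x => [x1 x2] /= [k Ek].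
have h3 : forall z : int, ((2 ^ 1)%N%:Z %| z)%Z <-> exists q : int, z = (2 * q)%R.
  move=> z; split; first by move/dvdzP => [q ->]; exists q; rewrite mulrC.
  by move=> [q ->]; apply: dvdz_mulr.
rewrite !h3; case: (par x2) => q [] E2; move: Ek; case: K => /= Ek.
all: by [left; split; [exists k | exists q]; lia
     | right; split; [exists k | exists q]; lia
     | left; split; [exists (k + q) | exists q]; lia
     | right; split; [exists (k + q) | exists q]; lia].
Qed.

Lemma NP1 : ~ inP 1.
Proof. by rewrite inP_coord z1E => -[k]; case: (sqt K) => /=; lia. Qed.

Lemma NPpi : ~ dv 1 pi.
Proof.
rewrite dvP => -[/dvdzP [q1 E1] /dvdzP [q2 E2]]; move: E1 E2; case: K => /=; lia.
Qed.

Lemma NPeta : ~ inP eta.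
Proof. by rewrite inP_coord => -[k]; case: K => /=; lia. Qed.

Lemma nP_add x y : ~ inP x -> ~ inP y -> inP (x + y).
Proof.
move=> hx hy; case: (Res0 x) => // hx'; case: (Res0 y) => // hy'.
have -> : x + y = (x - 1) + (y - 1) + 2%:R * 1 by ring.
by apply: inPD; [apply: inPD|apply: inP2].
Qed.

Lemma nP_mul x y : ~ inP x -> ~ inP y -> ~ inP (x * y).
Proof.
move=> hx hy hxy; case: (Res0 x) => // hx'; case: (Res0 y) => // hy'.
apply: NP1; have -> : (1 : R) = x * y - ((x - 1) * (y - 1) + (x - 1) + (y - 1)) by ring.
by apply: inPB => //; apply: inPD; [apply: inPD => //; apply: inPM|].
Qed.

Lemma nP_exp x n : ~ inP x -> ~ inP (x ^+ n).
Proof.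
move=> hx; elim: n => [|n IH]; first by rewrite expr0; apply: NP1.
by rewrite exprS; apply: nP_mul.
Qed.

Lemma nP_pi_mul y : ~ inP y -> ~ dv 1 (pi * y).
Proof.
move=> hy h; case: (Res0 y) => // hy'; apply: NPpi.
have -> : pi = pi * y - pi * (y - 1) by ring.
by apply: dvB => //; apply: inP_sq => //; apply: inP_pi.
Qed.

Lemma P8 e g : inP e -> inP g -> ~ dv 1 g -> dv 1 e \/ dv 1 (e + g).
Proof.
move=> he hg ng; case: (Res1 he) => [|he']; first by left.
case: (Res1 hg) => // hg'; right.
have -> : e + g = (e - pi) + (g - pi) + (2 ^ 1)%N%:R * pi by rewrite /=; ring.
by apply: dvD; [apply: dvD| apply: dv_2pow].
Qed.

Lemma nP_nat_odd n : odd n -> ~ inP n%:R.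
Proof.
move=> on h; apply: NP1.
have En : n = (2 * n./2 + 1)%N by rewrite -[n in LHS]odd_double_half on -mul2n addnC.
have -> : (1 : R) = n%:R - 2%:R * (n./2)%:R by rewrite {1}En natrD natrM; ring.
by apply: inPB => //; apply: inP2.
Qed.

Lemma split_nat (j : nat) : (exists i, j = i.*2) \/ (exists i, j = (i.*2).+1).
Proof.
case/boolP: (odd j) => oj; [right|left]; exists j./2.
  by rewrite -[j in LHS]odd_double_half oj add1n.
by rewrite -[j in LHS]odd_double_half (negbTE oj) add0n.
Qed.
End Ideal.

Definition pdv (K : ramfield) (j : nat) (x : zr (Dof K)) :=
  exists y : zr (Dof K), x = (2 ^ j./2)%N%:R * y /\ (odd j -> @inP K y).

Section Pdv.
Variable K : ramfield.
Local Notation R := (zr (Dof K)).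
Local Notation pi := (piof K : R).
Local Notation eta := (etaK K : R).
Local Notation dv := (@dv (Dof K)).
Local Notation inP := (@inP K).
Local Notation pdv := (@pdv K).

Lemma half_dbl i : (i.*2)./2 = i. Proof. exact: doubleK. Qed.
Lemma half_dblS i : ((i.*2).+1)./2 = i. Proof. by rewrite /= uphalf_double. Qed.

Lemma pdv_dv n x : pdv (n.*2) x <-> dv n x.
Proof.
rewrite /pdv half_dbl odd_double; split.
  by move=> [y [-> _]]; exists y.
by move=> [y ->]; exists y.
Qed.

Lemma pdvE i x : pdv (i.*2) x <-> exists y, x = (2 ^ i)%N%:R * y.
Proof. by rewrite pdv_dv. Qed.
Lemma pdvES i x : pdv (i.*2).+1 x <-> exists y, x = (2 ^ i)%N%:R * y /\ inP y.
Proof.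
rewrite /pdv half_dblS /= odd_double /=; split.
  by move=> [y [-> h]]; exists y; split => //; apply: h.
by move=> [y [-> h]]; exists y.
Qed.

Lemma pdvD j x y : pdv j x -> pdv j y -> pdv j (x + y).
Proof.
move=> [a [-> ha]] [b [-> hb]]; exists (a + b); split; first by rewrite mulrDr.
by move=> oj; apply: inPD; [apply: ha|apply: hb].
Qed.
Lemma pdvN j x : pdv j x -> pdv j (- x).
Proof.
move=> [a [-> ha]]; exists (- a); split; first by rewrite mulrN.
by move=> oj; apply: inPN; apply: ha.
Qed.
Lemma pdvB j x y : pdv j x -> pdv j y -> pdv j (x - y).
Proof. by move=> hx hy; apply: pdvD => //; apply: pdvN. Qed.
Lemma pdvM j x y : pdv j x -> pdv j (x * y).
Proof.
move=> [a [-> ha]]; exists (a * y); split; first by rewrite mulrA.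
by move=> oj; apply: inPM; apply: ha.
Qed.
Lemma pdvMl j x y : pdv j y -> pdv j (x * y).
Proof. by rewrite mulrC; apply: pdvM. Qed.
Lemma pdv0 j : pdv j 0.
Proof. by exists 0; split; [rewrite mulr0 | move=> _; apply: inP0]. Qed.
Lemma pdv_0 x : pdv 0 x.
Proof. by exists x; split; [rewrite mul1r|]. Qed.

Lemma pdvS j x : pdv j.+1 x -> pdv j x.
Proof.
case: (split_nat j) => -[i ->].
  by move/pdvES => [y [-> _]]; apply/pdvE; exists y.
have -> : (i.*2).+2 = (i.+1).*2 by [].
move/pdvE => [y ->]; apply/pdvES; exists (2%:R * y); split; last by apply: inP2.
by rewrite expnS natrM mulrA [_ * 2%:R]mulrC.
Qed.

Lemma pdv_le i j x : (i <= j)%N -> pdv j x -> pdv i x.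
Proof.
move=> /subnK <-; elim: (j - i)%N => [//|k IH] h.
by apply: IH; apply: pdvS; rewrite -addSn.
Qed.

Lemma dv_pdv n j x : (j <= n.*2)%N -> dv n x -> pdv j x.
Proof. by move=> le /pdv_dv; apply: pdv_le. Qed.

Lemma pdv_mul i j x y : pdv i x -> pdv j y -> pdv (i + j) (x * y).
Proof.
case: (split_nat i) => -[a ->]; case: (split_nat j) => -[b ->].
- move=> /pdvE [x' ->] /pdvE [y' ->]; rewrite -doubleD; apply/pdvE.
  by exists (x' * y'); rewrite expnD natrM; ring.
- move=> /pdvE [x' ->] /pdvES [y' [-> hy]]; rewrite addnS -doubleD; apply/pdvES.
  exists (x' * y'); split; last by apply: inPMl.
  by rewrite expnD natrM; ring.
- move=> /pdvES [x' [-> hx]] /pdvE [y' ->]; rewrite addSn -doubleD; apply/pdvES.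
  exists (x' * y'); split; last by apply: inPM.
  by rewrite expnD natrM; ring.
- move=> /pdvES [x' [-> hx]] /pdvES [y' [-> hy]].
  have -> : ((a.*2).+1 + (b.*2).+1 = (a + b).+1.*2)%N by rewrite addSn addnS doubleS doubleD.
  case: (inP_sq hx hy) => v hv; apply/pdvE; exists v.
  have -> : ((2 ^ (a + b).+1)%N%:R : R) = (2 ^ a)%N%:R * (2 ^ b)%N%:R * (2 ^ 1)%N%:R.
    by rewrite -!natrM -!expnD addn1.
  have E : (2 ^ a)%N%:R * x' * ((2 ^ b)%N%:R * y') = (2 ^ a)%N%:R * (2 ^ b)%N%:R * (x' * y') :> R by ring.
  by rewrite E hv; ring.
Qed.

Lemma pdv_pi j : pdv j (pi ^+ j).
Proof.
case: (split_nat j) => -[i ->].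
  apply/pdvE; exists (eta ^+ i).
  by rewrite -mul2n exprM expr2 pi2 exprMn -natrX.
apply/pdvES; exists (eta ^+ i * pi); split; last by apply: inPMl; apply: inP_pi.
by rewrite exprS -mul2n exprM expr2 pi2 exprMn -natrX; ring.
Qed.

Lemma pdv_unit_pi j w : ~ inP w -> ~ pdv j.+1 (pi ^+ j * w).
Proof.
move=> hw; case: (split_nat j) => -[i ->].
  move/pdvES => [y [E hy]].
  have hn : ~ inP (eta ^+ i * w) := nP_mul (nP_exp (n:=i) (@NPeta K)) hw.
  apply: hn.
  suff -> : eta ^+ i * w = y by [].
  apply: (@dv_cancel _ i); rewrite -E.
  by rewrite -mul2n exprM expr2 pi2 exprMn -natrX; ring.
have -> : ((i.*2).+2 = (i.+1).*2)%N by [].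
move/pdvE => [y E].
have hn : ~ inP (eta ^+ i * w) := nP_mul (nP_exp (n:=i) (@NPeta K)) hw.
apply: (nP_pi_mul hn).
exists y; apply: (@dv_cancel _ i).
have -> : ((2 ^ 1)%N%:R : R) = 2%:R by [].
rewrite [RHS]mulrA -natrM -expnSr -E.
by rewrite exprS -mul2n exprM expr2 pi2 exprMn -natrX; ring.
Qed.

Lemma pdv_res j E g : pdv j E -> pdv j g -> ~ pdv j.+1 g ->
  pdv j.+1 E \/ pdv j.+1 (E + g).
Proof.
case: (split_nat j) => -[i ->].
  move=> /pdvE [e ->] /pdvE [g' ->] ng.
  have ng' : ~ inP g' by move=> h; apply: ng; apply/pdvES; exists g'.
  case: (Res0 e) => he.
    by left; apply/pdvES; exists e.
  right; apply/pdvES; exists (e + g'); split; first by rewrite mulrDr.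
  case: (Res0 g') => // hg.
  have -> : e + g' = (e - 1) + (g' - 1) + 2%:R * 1 by ring.
  by apply: inPD; [apply: inPD|apply: inP2].
have -> : ((i.*2).+2 = (i.+1).*2)%N by [].
move=> /pdvES [e [-> he]] /pdvES [g' [-> hg]] ng.
have ng' : ~ dv 1 g'.
  move=> [y hy]; apply: ng; apply/pdvE; exists y.
  by rewrite hy expn1 expnSr natrM; ring.
case: (P8 he hg ng') => [[y hy]|[y hy]]; [left|right]; apply/pdvE; exists y.
  by rewrite hy expn1 expnSr natrM; ring.
by rewrite -mulrDr hy expn1 expnSr natrM; ring.
Qed.
End Pdv.

Section Hensel.
Variable K : ramfield.
Local Notation R := (zr (Dof K)).
Local Notation pi := (piof K : R).
Local Notation eta := (etaK K : R).
Local Notation dv := (@dv (Dof K)).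
Local Notation inP := (@inP K).
Local Notation pdv := (@pdv K).

Lemma expand (t h : R) n : exists Q : R,
  (t + h) ^+ n.+1 = t ^+ n.+1 + n.+1%:R * t ^+ n * h + h * h * Q.
Proof.
elim: n => [|n [Q IH]]; first by exists 0; rewrite !expr1 expr0; ring.
exists (t * Q + n.+1%:R * t ^+ n + h * Q).
rewrite exprS IH !exprS.
have -> : (n.+2%:R : R) = n.+1%:R + 1 by rewrite -natr1.
ring.
Qed.

Lemma pdv_pi_mul j (x : R) : pdv j (pi ^+ j * x).
Proof. by apply: pdvM; apply: pdv_pi. Qed.

Variables (d m : nat) (b : nat -> R) (t0 : R).
Hypothesis dE : d = (2 * m)%N.
Hypothesis om : odd m.
Hypothesis bC : forall n, dv n (b n.+1 - b n).
Hypothesis t0u : ~ inP t0.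
Hypothesis t0b : pdv 5 (t0 ^+ d - b 5).

Lemma bC' n k : (n <= k)%N -> dv n (b k - b n).
Proof.
move=> /subnK <-; elim: (k - n)%N => [|j IH]; first by rewrite add0n subrr; apply: dv_0.
have -> : b (j.+1 + n)%N - b n = (b (j + n).+1 - b (j + n)%N) + (b (j + n)%N - b n) by ring.
by apply: dvD => //; apply: (@dv_le _ _ (j + n)%N); [rewrite leq_addl|apply: bC].
Qed.

Definition hstep (k : nat) (t : R) : R :=
  if excluded_middle_informative (pdv (k + 6) (t ^+ d - b (k + 6))) then t
  else t + pi ^+ (k + 3).

Fixpoint tt (k : nat) : R := match k with 0 => t0 | k.+1 => hstep k (tt k) end.

Lemma tt_inv k : ~ inP (tt k) /\ pdv (k + 5) (tt k ^+ d - b (k + 5)).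
Proof.
elim: k => [|k [IHu IHe]]; first by split.
rewrite /= /hstep; set t := tt k.
have hE : pdv (k + 5) (t ^+ d - b (k + 6)).
  have -> : t ^+ d - b (k + 6) = (t ^+ d - b (k + 5)) - (b (k + 5).+1 - b (k + 5)).
    by rewrite addnS; ring.
  apply: pdvB => //; apply: (@dv_pdv _ (k + 5)); last by apply: bC.
  by rewrite -addnn leq_addl.
case: excluded_middle_informative => hs /=.
  by split => //; have -> : (k.+1 + 5 = k + 6)%N by lia.
have d0 : (0 < d)%N by rewrite dE muln_gt0 /=; case: m om.
have [Q HQ] := expand t (pi ^+ (k + 3)) d.-1.
rewrite prednK // in HQ.
set h := pi ^+ (k + 3) in HQ *.
set g := d%:R * t ^+ d.-1 * h.
have hg : pdv (k + 5) g.
  have -> : g = (2%:R * h) * (m%:R * t ^+ d.-1) by rewrite /g dE natrM; ring.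
  apply: pdvM; have -> : (k + 5 = 2 + (k + 3))%N by lia.
  apply: pdv_mul; last by apply: pdv_pi.
  by apply/(pdvE 1); exists 1; rewrite mulr1.
have ng : ~ pdv (k + 6) g.
  move=> hg6; have : pdv (k + 6) (eta * g) by apply: pdvMl.
  have -> : eta * g = pi ^+ (k + 5) * (m%:R * t ^+ d.-1).
    rewrite /g /h dE natrM.
    have -> : (k + 5 = (k + 3) + 2)%N by lia.
    rewrite [pi ^+ (_ + 2)]exprD expr2 pi2; ring.
  have -> : (k + 6 = (k + 5).+1)%N by lia.
  apply: pdv_unit_pi; apply: nP_mul; first by apply: nP_nat_odd.
  by apply: nP_exp.
have hs' : ~ pdv (k + 5).+1 (t ^+ d - b (k + 6)) by rewrite -addnS.
have ng' : ~ pdv (k + 5).+1 g by rewrite -addnS.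
case: (pdv_res hE hg ng') => // hEg.
split.
  move=> h1; apply: IHu; rewrite -(addrK h (tt k)).
  apply: inPB => //; rewrite /h addnS exprS; apply: inPM; apply: inP_pi.
have -> : (k.+1 + 5 = k + 6)%N by lia.
rewrite HQ.
have -> : t ^+ d + d%:R * t ^+ d.-1 * h + h * h * Q - b (k + 6) =
   (t ^+ d - b (k + 6) + g) + h * h * Q by rewrite /g; ring.
have e6 : (k + 6 = (k + 5).+1)%N by rewrite addnS.
rewrite -e6 in hEg.
apply: pdvD => //; apply: pdvM.
rewrite /h -exprD; apply: (@pdv_le _ _ (k + 3 + (k + 3))%N); first by lia.
by apply: pdv_pi.
Qed.

Lemma tt_step k : pdv (k + 3) (tt k.+1 - tt k).
Proof.
rewrite /= /hstep; case: excluded_middle_informative => hh /=.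
  by rewrite subrr; apply: pdv0.
have -> : tt k + pi ^+ (k + 3) - tt k = pi ^+ (k + 3) by ring.
by apply: pdv_pi.
Qed.

Lemma tt_compat i j : (i <= j)%N -> pdv (i + 3) (tt j - tt i).
Proof.
move=> /subnK <-; elim: (j - i)%N => [|l IH]; first by rewrite add0n subrr; apply: pdv0.
have -> : tt (l.+1 + i) - tt i = (tt (l + i).+1 - tt (l + i)) + (tt (l + i) - tt i) by ring.
apply: pdvD => //; apply: (@pdv_le _ _ ((l + i) + 3)%N); first by lia.
by apply: tt_step.
Qed.

Lemma hensel_ex : exists t : nat -> R,
  (forall n k, (n <= k)%N -> dv n (t k - t n)) /\
  (forall n, dv n (t n ^+ d - b n)) /\ (forall n, ~ inP (t n)).
Proof.
exists (fun n => tt n.*2); split; [|split].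
- move=> n k le; apply/(pdv_dv); apply: (@pdv_le _ _ (n.*2 + 3)%N); first by lia.
  by apply: tt_compat; rewrite leq_double.
- move=> n; have -> : tt n.*2 ^+ d - b n = (tt n.*2 ^+ d - b (n.*2 + 5)) + (b (n.*2 + 5) - b n) by ring.
  apply: dvD; last by apply: bC'; lia.
  apply/pdv_dv; apply: (@pdv_le _ _ (n.*2 + 5)); first by lia.
  by case: (tt_inv n.*2).
- by move=> n; case: (tt_inv n.*2).
Qed.
End Hensel.

Section Assembly.
Variable K : ramfield.
Local Notation R := (zr (Dof K)).
Local Notation pi := (piof K : R).
Local Notation dv := (@dv (Dof K)).
Local Notation inP := (@inP K).
Local Notation pdv := (@pdv K).

Lemma dv_sum n (I : finType) (P : pred I) (F : I -> R) :
  (forall i, P i -> dv n (F i)) -> dv n (\sum_(i | P i) F i).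
Proof.
move=> h; apply: (big_ind (dv n)) => //; first by apply: dv_0.
by move=> x y; apply: dvD.
Qed.

Lemma oc (x : Oel) n k : (n <= k)%N -> dv n ((oseq x k : R) - oseq x n).
Proof. by move=> le; apply/(@zqcong_dv (Dof K)); apply: ocompat. Qed.

Variables (m d s : nat) (a u : 'I_s -> Oel) (r : 'I_s -> nat).
Hypothesis dE : d = (2 * m)%N.
Hypothesis om : odd m.
Hypothesis hu : forall i, Ounit K (u i).
Hypothesis hdec : forall i, Odecomp K (a i) (r i) (u i).

Local Notation U i n := (oseq (u i) n : R).

Lemma assembly (z : 'I_s -> R) (p : 'I_s) :
  (r p %% d = 0)%N -> ~ inP (z p) ->
  pdv 5 (\sum_(i < s) pi ^+ (r i %% d) * U i 3 * z i ^+ d) ->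
  has_nontrivial_zero K d a.
Proof.
move=> rp zp hS.
have z0 : zq0 = (0 : R) by [].
have [v hv] := hu p.
have hv' : forall n, dv n (U p n * (oseq v n : R) - 1).
  by move=> n; apply/(@zqcong_dv (Dof K)); apply: hv.
pose C n := \sum_(i < s | i != p) pi ^+ (r i %% d) * U i n * z i ^+ d.
pose b n := - C n * (oseq v n : R).
have Cc : forall n k, (n <= k)%N -> dv n (C k - C n).
  move=> n k le; rewrite /C -sumrB; apply: dv_sum => i _.
  have -> : pi ^+ (r i %% d) * U i k * z i ^+ d - pi ^+ (r i %% d) * U i n * z i ^+ d
     = (U i k - U i n) * (pi ^+ (r i %% d) * z i ^+ d) by ring.
  by apply: dvM; apply: oc.
have bC : forall n, dv n (b n.+1 - b n).
  move=> n; rewrite /b.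
  have -> : - C n.+1 * (oseq v n.+1 : R) - - C n * (oseq v n : R) =
    - ((C n.+1 - C n) * (oseq v n.+1 : R) + C n * ((oseq v n.+1 : R) - oseq v n)) by ring.
  apply: dvN; apply: dvD; first by apply: dvM; apply: Cc.
  by apply: dvMl; apply: oc.
have S3 : \sum_(i < s) pi ^+ (r i %% d) * U i 3 * z i ^+ d = U p 3 * z p ^+ d + C 3.
  by rewrite (bigD1 p) //= rp expr0 mul1r.
have t0b : pdv 5 (z p ^+ d - b 5).
  have -> : z p ^+ d - b 5 = (oseq v 5 : R) * ((U p 3 * z p ^+ d + C 3) +
       (U p 5 - U p 3) * z p ^+ d + (C 5 - C 3)) - z p ^+ d * (U p 5 * (oseq v 5 : R) - 1).
    by rewrite /b; ring.
  apply: pdvB; last first.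
    apply: pdvMl; apply: (@dv_pdv _ 5) => //; exact: hv'.
  apply: pdvMl; rewrite -S3; apply: pdvD; first apply: pdvD => //.
    by apply: pdvM; apply: (@dv_pdv _ 3) => //; apply: oc.
  by apply: (@dv_pdv _ 3) => //; apply: Cc.
have [t [tC [tE tU]]] := hensel_ex dE om bC (zp : ~ inP (z p)) t0b.
pose T := (\max_(i < s) (r i %/ d))%N.
pose e i := (T - r i %/ d)%N.
pose X i n : R := pi ^+ e i * (if i == p then t n else z i).
have Xc : forall i n k, (n <= k)%N -> zqcong n (X i k) (X i n).
  move=> i n k le; apply/(@zqcong_dv (Dof K)); rewrite /X.
  case: (i == p); last by rewrite subrr; apply: dv_0.
  by rewrite -mulrBr; apply: dvMl; apply: tC.
exists (fun i => MkOel (Xc i)), (fun _ => 0%N); split.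
  exists p => /= hz.
  have h0 : dv (e p).+1 (pi ^+ e p * t (e p).+1 - 0).
    have h1 : zqcong (e p).+1 (X p (e p).+1) zq0 := hz (e p).+1.
    move/(@zqcong_dv (Dof K)): h1; rewrite z0.
    by rewrite /X eqxx.
  rewrite subr0 in h0.
  have : pdv (e p).+1 (pi ^+ e p * t (e p).+1).
    by apply: (dv_pdv (n := (e p).+1)); first by rewrite -addnn leq_addr.
  by apply: pdv_unit_pi.
move=> n; rewrite /diag_eval.
have -> : (\max_(i < s) 0)%N = 0%N by rewrite big1.
apply/(@zqcong_dv (Dof K)).
rewrite z0 subr0.
have -> : \big[zqadd/zq0]_(i < s) zqmul (Dof K) (oseq (a i) n)
       (zqmul (Dof K) (zqpow (Dof K) (oseq (MkOel (Xc i)) n) d)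
          ((2 ^ (d * (0 - 0)))%N%:Z, 0))
   = \sum_(i < s) (oseq (a i) n : R) * (X i n) ^+ d.
  apply: eq_bigr => i _; rewrite subnn muln0 expn0 /=.
  rewrite zpowE; change ((oseq (a i) n : R) * ((X i n ^+ d) * 1) = (oseq (a i) n : R) * X i n ^+ d).
  by rewrite mulr1.
have Ea : forall i, dv n ((oseq (a i) n : R) - pi ^+ r i * U i n).
  by move=> i; apply/(@zqcong_dv (Dof K)); rewrite -zpowE; apply: hdec.
have Er : forall i, (r i + d * e i = d * T + r i %% d)%N.
  move=> i; have le : (r i %/ d <= T)%N by rewrite /T; exact: leq_bigmax.
  rewrite {1}(divn_eq (r i) d) mulnBr (mulnC (r i %/ d)%N d).
  have h1 : (d * (r i %/ d) <= d * T)%N by rewrite leq_mul2l le orbT.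
  lia.
have -> : \sum_(i < s) (oseq (a i) n : R) * X i n ^+ d =
   \sum_(i < s) ((oseq (a i) n : R) - pi ^+ r i * U i n) * X i n ^+ d +
   pi ^+ (d * T) * \sum_(i < s) pi ^+ (r i %% d) * U i n * (if i == p then t n else z i) ^+ d.
  rewrite mulr_sumr -big_split /=; apply: eq_bigr => i _.
  rewrite /X exprMn -exprM.
  have -> : pi ^+ (d * T) * (pi ^+ (r i %% d) * U i n * (if i == p then t n else z i) ^+ d)
    = pi ^+ (d * T + r i %% d) * U i n * (if i == p then t n else z i) ^+ d by rewrite exprD; ring.
  by rewrite -Er exprD mulnC; ring.
apply: dvD; first by apply: dv_sum => i _; apply: dvM.
apply: dvMl; rewrite (bigD1 p) //= eqxx rp expr0 mul1r.
have -> : \sum_(i < s | i != p) pi ^+ (r i %% d) * U i n * (if i == p then t n else z i) ^+ d = C n.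
  by apply: eq_bigr => i /negbTE ->.
have -> : U p n * t n ^+ d + C n = U p n * (t n ^+ d - b n) - C n * (U p n * (oseq v n : R) - 1).
  by rewrite /b; ring.
by apply: dvB; [apply: dvMl; apply: tE | apply: dvMl; apply: hv'].
Qed.
End Assembly.

Definition canon (K : ramfield) (x : zq) : zq :=
  if sqt K then ((x.1 %% 8)%Z, (x.2 %% 4)%Z)
  else let b' := (x.2 %% 4)%Z in (((x.1 - x.2 + b') %% 8)%Z, b').
Definition idx (x : zq) : nat := (absz x.1 * 4 + absz x.2)%N.
Definition code_of (i : nat) : zq := ((i %/ 4)%N%:Z, (i %% 4)%N%:Z).
Definition cK (K : ramfield) : zq := zqadd zq1 (piof K).
Definition mulK (K : ramfield) (x y : zq) : zq := zqmul (Dof K) x y.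
Definition c2K (K : ramfield) : zq := mulK K (cK K) (cK K).
Definition negK (K : ramfield) (x : zq) : zq := zqmul (Dof K) (-1, 0) x.
Definition inPb (K : ramfield) (x : zq) : bool :=
  if sqt K then (2 %| x.1)%Z else (2 %| x.1 - x.2)%Z.

Definition tabr (K : ramfield) (r : zq) : nat * nat * seq (nat * nat) :=
  let rc := mulK K r (c2K K) in
  (idx (canon K r), idx (canon K rc),
   mkseq (fun i => let y := code_of i in
     (idx (canon K (zqadd y (negK K r))),
      idx (canon K (zqadd y (negK K rc))))) 32).
Definition stept (t : nat * nat * seq (nat * nat)) (M : seq bool) : seq bool :=
  let: (i1, i2, l) := t in
  map (fun p => let: (i, (j1, j2)) := p in
      [|| i1 == i, i2 == i, nth false M i, nth false M j1 | nth false M j2])%N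
    (zip (iota 0 32) l).
Fixpoint chkt (tabs : seq (nat * nat * seq (nat * nat))) (leaf : seq bool -> bool)
   (k : nat) (M : seq bool) : bool :=
  match k with
  | 0 => leaf M
  | k'.+1 => all (fun t => chkt tabs leaf k' (stept t M)) tabs
  end.
Definition NUK K := filter (fun i => inPb K (code_of i) && (i != 0)%N) (iota 0 32).
Definition leafNU (NU : seq nat) (M : seq bool) := nth false M 0 || all (nth false M) NU.
Definition leaf6 (K : ramfield) (reps : seq zq) (M : seq bool) :=
  nth false M 0 || all (fun r => nth false M (idx (canon K (negK K r))) ||
                                 nth false M (idx (canon K (negK K (mulK K r (c2K K)))))) reps.
Definition leaf0 (M : seq bool) := nth false M 0.

Definition repsK (K : ramfield) : seq zq :=
  match K with
  | Q2_s2 | Q2_s10 => [:: (1, 0); (1, 1); (1, 2); (1, 3); (3, 1); (3, 3); (5, 0); (5, 2)]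
  | Q2_sm2 | Q2_sm10 => [:: (1, 0); (1, 1); (1, 2); (1, 3); (3, 0); (3, 2); (5, 1); (5, 3)]
  | Q2_sm1 => [:: (0, 1); (0, 3); (1, 0); (1, 2); (2, 1); (3, 0); (5, 2); (6, 1)]
  | Q2_sm5 => [:: (0, 1); (1, 0); (1, 2); (2, 1); (2, 3); (3, 2); (4, 1); (5, 0)]
  end.

Definition cover_ok (K : ramfield) : bool :=
  all (fun i => inPb K (code_of i) ||
     has (fun r => (canon K r == code_of i) || (canon K (mulK K r (c2K K)) == code_of i)) (repsK K))
   (iota 0 32).
Definition c4_ok (K : ramfield) : bool :=
  canon K (zqadd (mulK K (c2K K) (c2K K)) (-1, 0)) == (0, 0).

Lemma chk1_all K : chkt (map (tabr K) (repsK K)) (leafNU (NUK K)) 5 (nseq 32 false).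
Proof. case: K; vm_cast_no_check (erefl true). Qed.
Lemma chk6_sm5 : chkt (map (tabr Q2_sm5) (repsK Q2_sm5)) (leaf6 Q2_sm5 (repsK Q2_sm5)) 5 (nseq 32 false).
Proof. vm_cast_no_check (erefl true). Qed.
Lemma chk0_sm1 : chkt (map (tabr Q2_sm1) (repsK Q2_sm1)) leaf0 5 (nseq 32 false).
Proof. vm_cast_no_check (erefl true). Qed.
Lemma cover_all K : cover_ok K.
Proof. case: K; vm_cast_no_check (erefl true). Qed.
Lemma c4_all K : c4_ok K.
Proof. case: K; vm_cast_no_check (erefl true). Qed.

Section Sem.
Variable K : ramfield.
Local Notation R := (zr (Dof K)).
Local Notation pi := (piof K : R).
Local Notation dv := (@dv (Dof K)).
Local Notation inP := (@inP K).
Local Notation pdv := (@pdv K).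
Local Notation c := (cK K : R).

Lemma pdv5E (z : R) : pdv 5 z <-> exists y : R, z = 4%:R * y /\ inP y.
Proof. by rewrite (@pdvES K 2). Qed.

Lemma canon_pdv (x : zq) : pdv 5 ((x : R) - (canon K x : R)).
Proof.
apply/pdv5E; case: x => [x1 x2]; rewrite /canon.
have e8 := divz_eq x1 8; have e4 := divz_eq x2 4.
have hc0 := @inP_coord K; move: hc0; case: (sqt K) => /= hc.
  exists (2 * (x1 %/ 8)%Z, (x2 %/ 4)%Z); split.
    rewrite znatE zsubE zmulE /=; apply: (f_equal2 pair) => /=; lia.
  by apply/hc; exists (x1 %/ 8)%Z.
set b' := (x2 %% 4)%Z.
have e8' := divz_eq (x1 - x2 + b') 8.
exists (2 * ((x1 - x2 + b') %/ 8)%Z + (x2 %/ 4)%Z, (x2 %/ 4)%Z); split.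
  rewrite znatE zsubE zmulE /=; apply: (f_equal2 pair) => /=; lia.
by apply/hc; exists ((x1 - x2 + b') %/ 8)%Z => /=; lia.
Qed.

Lemma canon_eq (x y : zq) : canon K x = canon K y -> pdv 5 ((x : R) - (y : R)).
Proof.
move=> e; have -> : (x : R) - y = ((x : R) - canon K x) - ((y : R) - canon K y).
  by rewrite e; ring.
by apply: pdvB; apply: canon_pdv.
Qed.

Lemma canon_code (x : zq) : code_of (idx (canon K x)) = canon K x /\ (idx (canon K x) < 32)%N.
Proof.
rewrite /canon; case: (sqt K) => /=.
  have h1 := modz_ge0 x.1 (isT : (8:int) != 0); have h2 := ltz_pmod x.1 (isT : (0 < (8:int))%R).
  have h3 := modz_ge0 x.2 (isT : (4:int) != 0); have h4 := ltz_pmod x.2 (isT : (0 < (4:int))%R).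
  move: h1 h2 h3 h4; case: (x.1 %% 8)%Z => // a; case: (x.2 %% 4)%Z => // b /= _ ha _ hb.
  rewrite /idx /code_of /=; split; last by lia.
  congr pair; congr Posz.
    by rewrite divnDl ?dvdn_mull // mulnK // divn_small ?addn0 //; lia.
  by rewrite modnMDl modn_small //; lia.
set b' := (x.2 %% 4)%Z.
have h1 := modz_ge0 (x.1 - x.2 + b') (isT : (8:int) != 0); have h2 := ltz_pmod (x.1 - x.2 + b') (isT : (0 < (8:int))%R).
have h3 := modz_ge0 x.2 (isT : (4:int) != 0); have h4 := ltz_pmod x.2 (isT : (0 < (4:int))%R).
rewrite -/b' in h3 h4 *.
move: h1 h2 h3 h4; case: ((x.1 - x.2 + b') %% 8)%Z => // a; case: b' => // b /= _ ha _ hb.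
rewrite /idx /code_of /=; split; last by lia.
congr pair; congr Posz.
  by rewrite divnDl ?dvdn_mull // mulnK // divn_small ?addn0 //; lia.
by rewrite modnMDl modn_small //; lia.
Qed.

Definition wv (e : nat) : R := if e == 0%N then 0 else if e == 1%N then 1 else c ^+ 2.
Fixpoint sw (us : seq R) (es : seq nat) : R :=
  match us, es with u :: us', e :: es' => u * wv e + sw us' es' | _, _ => 0 end.
Definition valid (n : nat) (es : seq nat) :=
  [/\ size es = n, all (fun e => e <= 2)%N es & has (fun e => e != 0)%N es].
Definition Reach (us : seq R) (y : R) := exists es, valid (size us) es /\ pdv 5 (sw us es - y).

Lemma Reach_congr us y y' : pdv 5 (y - y') -> Reach us y' -> Reach us y.
Proof.
move=> h [es [v hs]]; exists es; split => //.
have -> : sw us es - y = (sw us es - y') - (y - y') by ring.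
by apply: pdvB.
Qed.

Lemma Reach_cons0 r us y : Reach us y -> Reach (r :: us) y.
Proof.
move=> [es [[s1 s2 s3] hs]]; exists (0%N :: es); split.
  by split => //=; rewrite s1.
by rewrite /= /wv /= mulr0 add0r.
Qed.

Lemma Reach_cons r us y e : (e == 1%N) || (e == 2%N) -> Reach us (y - r * wv e) -> Reach (r :: us) y.
Proof.
move=> he [es [[s1 s2 s3] hs]]; exists (e :: es); split.
  split => //=; first by rewrite s1.
    by rewrite s2 andbT; case/orP: he => /eqP ->.
  by rewrite s3 orbT.
have -> : sw (r :: us) (e :: es) - y = sw us es - (y - r * wv e) by rewrite /=; ring.
by [].
Qed.

Lemma sw_zero us : sw us (nseq (size us) 0%N) = 0.
Proof. by elim: us => //= u us ->; rewrite /wv /= mulr0 addr0. Qed.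

Lemma Reach_single r us y e : (e == 1%N) || (e == 2%N) -> pdv 5 (r * wv e - y) -> Reach (r :: us) y.
Proof.
move=> he h; exists (e :: nseq (size us) 0%N); split.
  split => /=; first by rewrite size_nseq.
    apply/andP; split; first by case/orP: he => /eqP ->.
    by apply/allP => x /nseqP [->].
  by apply/orP; left; case/orP: he => /eqP ->.
by rewrite /= sw_zero addr0.
Qed.

Lemma negKE (x : zq) : (negK K x : R) = - (x : R).
Proof. by rewrite /negK (_ : ((-1, 0) : zq) = (-1 : R)) // -[zqmul _ _ _]/((-1 : R) * x) mulN1r. Qed.

Lemma c2KE : (c2K K : R) = c ^+ 2.
Proof. by rewrite expr2. Qed.

Definition dinv (us : seq R) (M : seq bool) := forall i, nth false M i -> Reach us (code_of i : R).

Lemma dinv0 : dinv [::] (nseq 32 false).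
Proof. by move=> i; rewrite nth_nseq if_same. Qed.

Lemma dinv_step us M (r : zq) : dinv us M -> dinv ((r : R) :: us) (stept (tabr K r) M).
Proof.
move=> h i; rewrite /stept /tabr.
case: (ltnP i 32) => hi; last first.
  by rewrite nth_default // size_map size_zip size_iota size_mkseq minnn.
rewrite (nth_map (0%N, (0%N, 0%N))) ?size_zip ?size_iota ?size_mkseq ?minnn //.
rewrite nth_zip ?size_iota ?size_mkseq // nth_iota // nth_mkseq // add0n.
set y := code_of i.
move=> /orP [/eqP E|/orP [/eqP E|/orP [hM|/orP [hM|hM]]]].
- have [E1 _] := canon_code r; rewrite /y -E E1.
  apply: (@Reach_single _ _ _ 1%N) => //; rewrite /wv /= mulr1.
  by apply: canon_pdv.
- have [E1 _] := canon_code (mulK K r (c2K K)); rewrite /y -E E1.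
  apply: (@Reach_single _ _ _ 2%N) => //; rewrite /wv /=.
  by rewrite -c2KE; apply: canon_pdv.
- by apply: Reach_cons0; apply: h.
- apply: (@Reach_cons _ _ _ 1%N) => //; rewrite /wv /= mulr1.
  have := h _ hM; have [E1 _] := canon_code (zqadd y (negK K r)); rewrite E1.
  apply: Reach_congr; have := canon_pdv (zqadd y (negK K r)).
  by rewrite (_ : (zqadd y (negK K r) : R) = (y : R) + negK K r) // negKE.
- apply: (@Reach_cons _ _ _ 2%N) => //; rewrite /wv /=.
  have := h _ hM; have [E1 _] := canon_code (zqadd y (negK K (mulK K r (c2K K)))); rewrite E1.
  apply: Reach_congr; have := canon_pdv (zqadd y (negK K (mulK K r (c2K K)))).
  rewrite (_ : (zqadd y (negK K (mulK K r (c2K K))) : R) = (y : R) + negK K (mulK K r (c2K K))) // negKE.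
  by rewrite (_ : (mulK K r (c2K K) : R) = (r : R) * c2K K) // c2KE.
Qed.

Lemma chkt_sound leaf k M us : chkt (map (tabr K) (repsK K)) leaf k M -> dinv us M ->
  forall rs, size rs = k -> all (fun r => r \in repsK K) rs ->
  exists M', dinv (catrev (map (fun x : zq => x : R) rs) us) M' /\ leaf M'.
Proof.
elim: k M us => [|k IH] M us hc hi [|r rs] //= hs.
  by move=> _; exists M.
case/andP => hr hrs; case: hs => hs.
have hc' : chkt (map (tabr K) (repsK K)) leaf k (stept (tabr K r) M).
  by move/allP: hc; apply; apply: map_f.
exact: (IH _ _ hc' (dinv_step (r := r) hi) rs hs hrs).
Qed.

Lemma inPbP (x : zq) : inPb K x <-> inP (x : R).
Proof.
rewrite inP_coord /inPb; case: (sqt K); split.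
- by move/dvdzP => [q ->]; exists q; rewrite mulrC.
- by move=> [q ->]; apply: dvdz_mulr.
- by move/dvdzP => [q ->]; exists q; rewrite mulrC.
- by move=> [q ->]; apply: dvdz_mulr.
Qed.

Lemma pdv_inP j (x : R) : (0 < j)%N -> pdv j x -> inP x.
Proof.
move=> j0 h; have : pdv 1 x by apply: (pdv_le j0 h).
by move=> [y [-> hy]]; rewrite expn0 mul1r; apply: hy.
Qed.

Lemma inP_congr (x y : R) : pdv 5 (x - y) -> inP y -> inP x.
Proof.
move=> h hy; have -> : x = (x - y) + y by ring.
by apply: inPD => //; apply: (pdv_inP _ h).
Qed.

Lemma code0 : (code_of 0 : R) = 0. Proof. by []. Qed.

Lemma leafNU_sem us M : dinv us M -> leafNU (NUK K) M ->
  Reach us 0 \/ (forall y, inP y -> ~ pdv 5 y -> Reach us y).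
Proof.
move=> hi /orP [h0|hall]; first by left; rewrite -code0; apply: hi.
right => y hy ny.
have [E1 lt] := canon_code y.
set j := idx (canon K y) in E1 lt.
have hj : j \in NUK K.
  rewrite mem_filter mem_iota /= lt andbT; apply/andP; split.
    by apply/inPbP; rewrite E1; apply: (inP_congr _ hy); rewrite -opprB; apply: pdvN; apply: canon_pdv.
  apply/eqP => j0; apply: ny; have := canon_pdv y; rewrite -E1 j0 code0 subr0.
  by [].
have := hi j ((allP hall) j hj); rewrite E1; apply: Reach_congr.
by apply: canon_pdv.
Qed.

Lemma leaf0_sem us M : dinv us M -> leaf0 M -> Reach us 0.
Proof. by move=> hi h0; rewrite -code0; apply: hi. Qed.

Lemma leaf6_sem us M : dinv us M -> leaf6 K (repsK K) M ->
  forall r, r \in repsK K -> Reach ((r : R) :: us) 0.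
Proof.
move=> hi /orP [h0|hall] r hr; first by apply: Reach_cons0; apply: leaf0_sem h0.
case/orP: ((allP hall) r hr) => hM.
  apply: (@Reach_cons _ _ _ 1%N) => //; rewrite /wv /= mulr1 sub0r.
  have := hi _ hM; have [E1 _] := canon_code (negK K r); rewrite E1.
  by apply: Reach_congr; rewrite -(negKE r); apply: canon_pdv.
apply: (@Reach_cons _ _ _ 2%N) => //; rewrite /wv /= sub0r.
have := hi _ hM; have [E1 _] := canon_code (negK K (mulK K r (c2K K))); rewrite E1.
apply: Reach_congr; have := canon_pdv (negK K (mulK K r (c2K K))).
by rewrite negKE (_ : (mulK K r (c2K K) : R) = (r : R) * c2K K) // c2KE.
Qed.

Lemma cover_sem (u : R) : ~ inP u -> exists r, r \in repsK K /\
   (pdv 5 (u - (r : R)) \/ pdv 5 (u - (r : R) * c ^+ 2)).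
Proof.
move=> nu; have [E1 lt] := canon_code u.
have := (allP (cover_all K)) (idx (canon K u)); rewrite mem_iota /= lt E1 => /(_ isT).
case/orP => [/inPbP h|/hasP [r hr /orP [/eqP e|/eqP e]]].
- by exfalso; apply: nu; apply: (inP_congr _ h); apply: canon_pdv.
- by exists r; split => //; left; apply: canon_eq.
- exists r; split => //; right; rewrite -c2KE.
  by have := canon_eq (esym e).
Qed.

Lemma c_unit : ~ inP c.
Proof.
move=> h; apply: (@NP1 K); have -> : (1 : R) = c - pi by rewrite /cK; rewrite (_ : (zqadd zq1 (piof K) : R) = 1 + pi) //; ring.
by apply: inPB => //; apply: inP_pi.
Qed.

Lemma c4 : pdv 5 (c ^+ 4 - 1).
Proof.
have := c4_all K; rewrite /c4_ok => /eqP e.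
have := canon_eq (x := zqadd (mulK K (c2K K) (c2K K)) (-1, 0)) (y := (0, 0)).
rewrite e; have -> : canon K (0, 0) = (0, 0) by rewrite /canon; case: (sqt K).
move=> /(_ erefl).
have -> : ((zqadd (mulK K (c2K K) (c2K K)) (-1, 0)) : R) = (c2K K : R) * c2K K + (-1 : R) by [].
by rewrite c2KE subr0 -exprD.
Qed.

Lemma pow1 (x : R) j : pdv 5 (x - 1) -> pdv 5 (x ^+ j - 1).
Proof.
move=> h; elim: j => [|j IH]; first by rewrite expr0 subrr; apply: pdv0.
have -> : x ^+ j.+1 - 1 = x * (x ^+ j - 1) + (x - 1) by rewrite exprS; ring.
by apply: pdvD => //; apply: pdvMl.
Qed.

Lemma cd_c2 d m : d = (2 * m)%N -> odd m -> pdv 5 (c ^+ d - c ^+ 2).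
Proof.
move=> -> om.
have -> : (2 * m = 4 * m./2 + 2)%N.
  by rewrite -[m in LHS]odd_double_half om -mul2n; lia.
rewrite exprD exprM.
have -> : c ^+ 4 ^+ m./2 * c ^+ 2 - c ^+ 2 = (c ^+ 4 ^+ m./2 - 1) * c ^+ 2 by ring.
by apply: pdvM; apply: pow1; apply: c4.
Qed.

Definition swp (e : nat) : nat := if e == 1%N then 2%N else if e == 2%N then 1%N else e.

Lemma transfer_aux (us rs : seq R) (es : seq nat) :
  size us = size rs ->
  (forall k, (k < size us)%N -> pdv 5 (us`_k - rs`_k) \/ pdv 5 (us`_k - rs`_k * c ^+ 2)) ->
  size es = size rs -> all (fun e => e <= 2)%N es ->
  exists es', [/\ size es' = size us, all (fun e => e <= 2)%N es',
     has (fun e => e != 0)%N es' = has (fun e => e != 0)%N es &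
     pdv 5 (sw us es' - sw rs es)].
Proof.
elim: us rs es => [|u us IH] [|r rs] [|e es] //=.
  by move=> _ _ _ _; exists [::]; split => //; rewrite subrr; apply: pdv0.
move=> [hs] hk [hes] /andP [he hall].
have hk' : forall k, (k < size us)%N -> pdv 5 (us`_k - rs`_k) \/ pdv 5 (us`_k - rs`_k * c ^+ 2).
  by move=> k lt; apply: (hk k.+1).
have [es' [s1 s2 s3 s4]] := IH rs es hs hk' hes hall.
case: (hk 0%N isT) => /= h0.
  exists (e :: es'); split => //=; first by rewrite s1.
    by rewrite he s2.
    by rewrite s3.
  have -> : u * wv e + sw us es' - (r * wv e + sw rs es) = (u - r) * wv e + (sw us es' - sw rs es) by ring.
  by apply: pdvD => //; apply: pdvM.
exists (swp e :: es'); split => //=; first by rewrite s1.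
  by rewrite s2 andbT; move: he; rewrite /swp; case: (e) => [|[|[|e0]]].
  by rewrite s3; congr orb; rewrite /swp; case: (e) => [|[|[|e0]]].
have -> : u * wv (swp e) + sw us es' - (r * wv e + sw rs es) = (u * wv (swp e) - r * wv e) + (sw us es' - sw rs es) by ring.
apply: pdvD => //.
move: he; rewrite /swp /wv; case: e => [|[|[|e]]] //= _.
- by rewrite !mulr0 subrr; apply: pdv0.
- have -> : u * c ^+ 2 - r * 1 = (u - r * c ^+ 2) * c ^+ 2 + r * (c ^+ 4 - 1).
    by rewrite (_ : (4 = 2 + 2)%N) // exprD; ring.
  by apply: pdvD; [apply: pdvM| apply: pdvMl; apply: c4].
- by rewrite mulr1.
Qed.

Lemma transfer (us rs : seq R) y : size us = size rs ->
  (forall k, (k < size us)%N -> pdv 5 (us`_k - rs`_k) \/ pdv 5 (us`_k - rs`_k * c ^+ 2)) ->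
  Reach rs y -> Reach us y.
Proof.
move=> hs hk [es [[s1 s2 s3] h]].
have [es' [t1 t2 t3 t4]] := transfer_aux hs hk s1 s2.
exists es'; split; first by split => //; rewrite t3.
have -> : sw us es' - y = (sw us es' - sw rs es) + (sw rs es - y) by ring.
by apply: pdvD.
Qed.
End Sem.

Section Final.
Variable K : ramfield.
Local Notation R := (zr (Dof K)).
Local Notation pi := (piof K : R).
Local Notation dv := (@dv (Dof K)).
Local Notation inP := (@inP K).
Local Notation pdv := (@pdv K).
Local Notation c := (cK K : R).
Local Notation Reach := (@Reach K).
Local Notation sw := (@sw K).
Local Notation wv := (@wv K).

Definition zz (e : nat) : R := if e == 0%N then 0 else if e == 1%N then 1 else c.

Variables (m d s : nat) (a u : 'I_s -> Oel) (r : 'I_s -> nat).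
Hypothesis dE : d = (2 * m)%N.
Hypothesis om : odd m.
Hypothesis hu : forall i, Ounit K (u i).
Hypothesis hdec : forall i, Odecomp K (a i) (r i) (u i).

Local Notation U i n := (oseq (u i) n : R).
Definition co (i : 'I_s) : R := pi ^+ (r i %% d) * U i 3.

Lemma d_pos : (0 < d)%N.
Proof. by rewrite dE muln_gt0 /=; case: m om. Qed.

Lemma zz_wv e : pdv 5 (zz e ^+ d - wv e).
Proof.
rewrite /zz /wv; case: eqP => _; first by rewrite expr0n eqn0Ngt d_pos subrr; apply: pdv0.
case: eqP => _; first by rewrite expr1n subrr; apply: pdv0.
exact: cd_c2 dE om.
Qed.

Lemma sum_L (L : seq 'I_s) (es : seq nat) : uniq L -> size es = size L ->
  pdv 5 (\sum_(i <- L) co i * zz (nth 0%N es (index i L)) ^+ d - sw (map co L) es).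
Proof.
elim: L es => [|j L IH] [|e es] //=.
  by move=> _ _; rewrite big_nil subrr; apply: pdv0.
case/andP => jL uL [hs]; rewrite big_cons eqxx /=.
have -> : \sum_(i <- L) co i * zz (nth 0%N (e :: es) (if j == i then 0%N else (index i L).+1)) ^+ d
       = \sum_(i <- L) co i * zz (nth 0%N es (index i L)) ^+ d.
  apply: eq_big_seq => i iL; case: eqP => [ji|//]; by move: jL; rewrite ji iL.
have -> : co j * zz e ^+ d + \sum_(i <- L) co i * zz (nth 0%N es (index i L)) ^+ d -
    (co j * wv e + sw [seq co i | i <- L] es) =
    co j * (zz e ^+ d - wv e) + (\sum_(i <- L) co i * zz (nth 0%N es (index i L)) ^+ d - sw [seq co i | i <- L] es) by ring.
by apply: pdvD; [apply: pdvMl; apply: zz_wv | apply: IH].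
Qed.

Lemma realize (L : seq 'I_s) (es : seq nat) (p0 : 'I_s) (k : nat) :
  uniq L -> size es = size L -> (k < size L)%N -> nth 0%N es k != 0%N ->
  (r (nth p0 L k) %% d = 0)%N ->
  pdv 5 (sw (map co L) es) -> has_nontrivial_zero K d a.
Proof.
move=> uL hs hk ek rk hsw.
pose z i := if i \in L then zz (nth 0%N es (index i L)) else 0.
apply: (assembly dE om hu hdec (z := z) (p := nth p0 L k)) => //.
  rewrite /z mem_nth // index_uniq // /zz; move/negbTE: ek => ->.
  case: eqP => _; first by apply: (@NP1 K).
  by apply: c_unit.
rewrite (bigID (fun i => i \in L)) /=.
have -> : \sum_(i < s | i \notin L) pi ^+ (r i %% d) * U i 3 * z i ^+ d = 0.
  by apply: big1 => i /negbTE iL; rewrite /z iL expr0n eqn0Ngt d_pos mulr0.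
rewrite addr0 -big_uniq //=.
have -> : \sum_(i <- L) pi ^+ (r i %% d) * U i 3 * z i ^+ d =
          \sum_(i <- L) co i * zz (nth 0%N es (index i L)) ^+ d.
  by apply: eq_big_seq => i iL; rewrite /z iL /co.
have -> : \sum_(i <- L) co i * zz (nth 0%N es (index i L)) ^+ d =
  (\sum_(i <- L) co i * zz (nth 0%N es (index i L)) ^+ d - sw (map co L) es) + sw (map co L) es by ring.
by apply: pdvD => //; apply: sum_L.
Qed.
End Final.

Definition toR (K : ramfield) (rs : seq zq) : seq (zr (Dof K)) := map (fun x : zq => x : zr (Dof K)) rs.

Section Facts.
Variable K : ramfield.
Local Notation R := (zr (Dof K)).
Local Notation inP := (@inP K).
Local Notation pdv := (@pdv K).
Local Notation c := (cK K : R).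
Local Notation Reach := (@Reach K).

Lemma reps_of (us : seq R) : (forall x, x \in us -> ~ inP x) ->
  exists rs : seq zq, [/\ size rs = size us, all (fun r => r \in repsK K) rs &
    forall k, (k < size us)%N -> pdv 5 (us`_k - (toR K rs)`_k) \/ pdv 5 (us`_k - (toR K rs)`_k * c ^+ 2)].
Proof.
elim: us => [|x us IH] hu; first by exists [::].
have [|rs [s1 s2 s3]] := IH; first by move=> y yu; apply: hu; rewrite inE yu orbT.
have [r0 [hr hr']] := cover_sem (hu x (mem_head _ _)).
exists (r0 :: rs); split => /=; first by rewrite s1.
  by rewrite hr s2.
by case => [|k] //= lt; apply: s3.
Qed.

Lemma get_M leaf (us : seq R) : (forall x, x \in us -> ~ inP x) -> size us = 5%N ->
  chkt (map (tabr K) (repsK K)) leaf 5 (nseq 32 false) ->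
  exists rs, [/\ size rs = size us,
    forall k, (k < size us)%N -> pdv 5 (us`_k - (toR K rs)`_k) \/ pdv 5 (us`_k - (toR K rs)`_k * c ^+ 2),
    all (fun r => r \in repsK K) rs &
    exists M, @dinv K (toR K rs) M /\ leaf M].
Proof.
move=> hu h5 hc; have [rs [s1 s2 s3]] := reps_of hu.
exists rs; split => //.
have := chkt_sound hc (@dinv0 K) (rs := rev rs); rewrite size_rev s1 h5 all_rev.
move=> /(_ erefl s2) [M [hM hl]]; exists M; split => //.
by move: hM; rewrite catrevE cats0 map_rev revK.
Qed.

Lemma Fact1 (us : seq R) : (forall x, x \in us -> ~ inP x) -> size us = 5%N ->
  Reach us 0 \/ (forall y, inP y -> ~ pdv 5 y -> Reach us y).
Proof.
move=> hu h5; have [rs [s1 s3 s2 [M [hM hl]]]] := get_M hu h5 (chk1_all K).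
have hs : size us = size (toR K rs) by rewrite size_map s1.
case: (leafNU_sem hM hl) => [h|h]; [left|right].
  exact: transfer hs s3 h.
by move=> y hy ny; apply: (transfer hs s3); apply: h.
Qed.
End Facts.

Lemma Fact0 (us : seq (zr (Dof Q2_sm1))) : (forall x, x \in us -> ~ inP x) -> size us = 5%N ->
  Reach us 0.
Proof.
move=> hu h5; have [rs [s1 s3 s2 [M [hM hl]]]] := get_M hu h5 chk0_sm1.
have hs : size us = size (toR Q2_sm1 rs) by rewrite size_map s1.
by apply: (transfer hs s3); apply: leaf0_sem hM hl.
Qed.

Lemma Fact6 (x : zr (Dof Q2_sm5)) (us : seq (zr (Dof Q2_sm5))) :
  (forall y, y \in x :: us -> ~ inP y) -> size us = 5%N -> Reach (x :: us) 0.
Proof.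
move=> hu h5.
have hu' : forall y, y \in us -> ~ inP y by move=> y yu; apply: hu; rewrite inE yu orbT.
have [rs [s1 s3 s2 [M [hM hl]]]] := get_M hu' h5 chk6_sm5.
have [r0 [hr hr']] := cover_sem (hu x (mem_head _ _)).
have hs : size (x :: us) = size (toR Q2_sm5 (r0 :: rs)) by rewrite /= size_map s1.
apply: (transfer hs); last by apply: (leaf6_sem hM hl hr).
by case => [|k] //= lt; apply: s3.
Qed.

Lemma sw_cat K (us1 us2 : seq (zr (Dof K))) es1 es2 : size es1 = size us1 ->
  sw (us1 ++ us2) (es1 ++ es2) = sw us1 es1 + sw us2 es2.
Proof.
elim: us1 es1 => [|x us1 IH] [|e es1] //=; first by rewrite add0r.
by move=> [h]; rewrite IH // addrA.
Qed.

Section Final2.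
Variable K : ramfield.
Local Notation R := (zr (Dof K)).
Local Notation pi := (piof K : R).
Local Notation inP := (@inP K).
Local Notation pdv := (@pdv K).
Local Notation sw := (@sw K).
Variables (m d s : nat) (a u : 'I_s -> Oel) (r : 'I_s -> nat).
Hypothesis dE : d = (2 * m)%N.
Hypothesis om : odd m.
Hypothesis hu : forall i, Ounit K (u i).
Hypothesis hdec : forall i, Odecomp K (a i) (r i) (u i).
Local Notation co := (@co K d s u r).

Lemma realize_pre (L1 L2 : seq 'I_s) es1 es2 (p0 : 'I_s) :
  uniq (L1 ++ L2) -> (forall i, i \in L1 -> r i %% d = 0)%N ->
  size es1 = size L1 -> size es2 = size L2 -> has (fun e => e != 0)%N es1 ->
  pdv 5 (sw (map co L1) es1 + sw (map co L2) es2) -> has_nontrivial_zero K d a.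
Proof.
move=> uL hL s1 s2 /hasP [x xes hx] hsw.
have kl : (index x es1 < size es1)%N by rewrite index_mem.
apply: (realize dE om hu hdec (L := L1 ++ L2) (es := es1 ++ es2) (p0 := p0) (k := index x es1)) => //.
- by rewrite !size_cat s1 s2.
- by rewrite size_cat -s1 ltn_addr.
- by rewrite nth_cat kl nth_index.
- by rewrite nth_cat -s1 kl; apply: hL; apply: mem_nth; rewrite -s1.
- by rewrite map_cat sw_cat // size_map.
Qed.

Lemma unitU i : ~ inP (oseq (u i) 3 : R).
Proof.
move=> h; have [v hv] := hu i.
have h1 : dv (D := Dof K) 3 ((oseq (u i) 3 : R) * (oseq v 3 : R) - 1).
  by apply/(@zqcong_dv (Dof K)); apply: hv.
apply: (@NP1 K).
have -> : (1 : R) = (oseq (u i) 3 : R) * (oseq v 3 : R) - ((oseq (u i) 3 : R) * (oseq v 3 : R) - 1) by ring.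
apply: inPB; first by apply: inPM.
by apply: (@pdv_inP K 6) => //; apply/(@pdv_dv K 3).
Qed.

Lemma co0 i : (r i %% d = 0)%N -> co i = oseq (u i) 3.
Proof. by move=> h; rewrite /co h expr0 mul1r. Qed.

Lemma units_co (L : seq 'I_s) : (forall i, i \in L -> r i %% d = 0)%N ->
  forall x, x \in map co L -> ~ inP x.
Proof. by move=> hL x /mapP [i iL ->]; rewrite co0 ?hL //; apply: unitU. Qed.
End Final2.




Theorem lemma12 (K : ramfield) (m d s : nat) (a u : 'I_s -> Oel)
  (r : 'I_s -> nat) :
  d = (2 * m)%N -> odd m -> (3 <= m)%N ->
  (* a_i in O \ {0}, written a_i = pi^(r i) u_i with u_i a unit *)
  (forall i, ~ Ozero (a i)) ->
  (forall i, Ounit K (u i)) ->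
  (forall i, Odecomp K (a i) (r i) (u i)) ->
  normalized d r ->
  (5 <= level_count d r 0)%N ->
  ((7 * d <= 5 * s)%N \/
   ((K = Q2_sm1 \/ K = Q2_sm5) /\ (d + 1 <= s)%N)) ->
  has_nontrivial_zero K d a.
Proof.
move=> dE om m3 _ hu hdec hnorm h5 hs.
set A0 := [set i : 'I_s | (r i %% d == 0)%N].
have hA0 : level_count d r 0 = #|A0| by [].
set L0 := enum A0.
have uL0 : uniq L0 := enum_uniq _.
have sL0 : size L0 = level_count d r 0 by rewrite hA0 cardE.
have lev0 : forall i, i \in L0 -> (r i %% d = 0)%N by move=> i; rewrite mem_enum inE => /eqP.
have d6 : (6 <= d)%N by rewrite dE; lia.
have d0 : (0 < d)%N by lia.
have [p0 _] : exists p0 : 'I_s, p0 \in A0 by apply/card_gt0P; rewrite -hA0; lia.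
set cf := @co K d s u r.
set L5 := take 5 L0.
have sL5 : size L5 = 5%N by rewrite size_takel // sL0.
have lev5 : forall i, i \in L5 -> (r i %% d = 0)%N by move=> i /mem_take; apply: lev0.
have uL5 : uniq L5 by apply: take_uniq.
have un5 := units_co hu lev5.
have sm5 : size (map cf L5) = 5%N by rewrite size_map.
case: (boolP [exists q : 'I_s, (0 < r q %% d <= 4)%N]).
  move=> /existsP [q /andP [q1 q4]].
  have qL : q \notin L5 by apply/negP => /lev5 h; rewrite h in q1.
  have U : uniq (L5 ++ [:: q]) by rewrite cat_uniq uL5 /= andbT orbF.
  case: (Fact1 un5 sm5) => [[es [[s1 s2 s3] h]]|Hy].
    apply: (realize_pre (es1 := es) (es2 := [:: 0%N]) dE om hu hdec p0 U lev5) => //.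
      by rewrite s1 size_map.
    by move: h; rewrite subr0 /= /wv /= mulr0 !addr0.
  have iy : inP (- cf q).
    rewrite /cf /co -(prednK q1) exprS -mulrA; apply: inPN; apply: inPM; apply: inP_pi.
  have ny : ~ pdv 5 (- cf q).
    move=> h; have : pdv (r q %% d).+1 (cf q).
      by apply: (pdv_le (j := 5)); [rewrite ltnS | rewrite -[cf q]opprK; apply: pdvN].
    by apply: pdv_unit_pi; apply: unitU.
  have [es [[s1 s2 s3] h]] := Hy _ iy ny.
  apply: (realize_pre (es1 := es) (es2 := [:: 1%N]) dE om hu hdec p0 U lev5) => //.
    by rewrite s1 size_map.
  by move: h; rewrite opprK /= /wv /= mulr1 addr0.
move=> hno.
have lc_other : forall l, (0 < l <= 4)%N -> level_count d r l = 0%N.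
  move=> l hl; apply/eqP; rewrite cards_eq0; apply/eqP/setP => i; rewrite inE in_set0.
  apply/negbTE/negP => /eqP hi; apply: (negP hno); apply/existsP; exists i; by rewrite hi.
have hn4 := hnorm 4%N (leq_trans (isT : (4 < 6)%N) d6).
have sum5 : (\sum_(l < 5) level_count d r l = level_count d r 0)%N.
  rewrite big_ord_recl /= big1 ?addn0 // => l _; apply: lc_other.
  by rewrite /bump /= add1n ltnS -ltnS ltn_ord.
rewrite sum5 in hn4.
case: hs => [h7 | [hK hs1]].
  have l7 : (7 <= level_count d r 0)%N.
    by rewrite -(leq_pmul2l d0); lia.
  set x6 := nth p0 L0 5; set x7 := nth p0 L0 6.
  have E7 : take 7 L0 = L5 ++ [:: x6; x7].
    rewrite (take_nth p0); last by rewrite sL0; lia.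
    rewrite (take_nth p0); last by rewrite sL0; lia.
    by rewrite -!cats1 -catA.
  have u7 : uniq (L5 ++ [:: x6; x7]) by rewrite -E7; apply: take_uniq.
  have l6 : (r x6 %% d = 0)%N by apply: lev0; apply: mem_nth; rewrite sL0; lia.
  have l7' : (r x7 %% d = 0)%N by apply: lev0; apply: mem_nth; rewrite sL0; lia.
  have n6 : ~ inP (cf x6) by rewrite /cf co0 //; apply: unitU.
  have n7 : ~ inP (cf x7) by rewrite /cf co0 //; apply: unitU.
  have iy : inP (cf x6 + cf x7) by apply: nP_add.
  case: (excluded_middle_informative (pdv 5 (cf x6 + cf x7))) => hy.
    have u7' : uniq ([:: x6; x7] ++ L5) by rewrite uniq_catC.
    apply: (realize_pre (es1 := [:: 1%N; 1%N]) (es2 := nseq 5 0%N) dE om hu hdec p0 u7') => //.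
    - by move=> i; rewrite !inE => /orP [/eqP ->|/eqP ->].
    - have := sw_zero (map cf L5); rewrite sm5 => ->.
      by rewrite /= /wv /= !mulr1 !addr0.
  case: (Fact1 un5 sm5) => [[es [[s1 s2 s3] h]]|Hy].
    apply: (realize_pre (es1 := es) (es2 := [:: 0%N; 0%N]) dE om hu hdec p0 u7 lev5) => //.
      by rewrite s1 size_map.
    by move: h; rewrite subr0 /= /wv /= !mulr0 !addr0.
  have ny : ~ pdv 5 (- (cf x6 + cf x7)) by move=> h; apply: hy; rewrite -[_ + _]opprK; apply: pdvN.
  have [es [[s1 s2 s3] h]] := Hy _ (inPN iy) ny.
  apply: (realize_pre (es1 := es) (es2 := [:: 1%N; 1%N]) dE om hu hdec p0 u7 lev5) => //.
    by rewrite s1 size_map.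
  by move: h; rewrite opprK /= /wv /= !mulr1 addr0 addrA.
have l6 : (6 <= level_count d r 0)%N.
  have : (d * 5 < d * level_count d r 0)%N by lia.
  by rewrite ltn_pmul2l.
have u0 : uniq (L5 ++ [::]) by rewrite cats0.
case: hK => eK; subst K.
  have [es [[s1 s2 s3] h]] := Fact0 un5 sm5.
  apply: (realize_pre (es1 := es) (es2 := [::]) dE om hu hdec p0 u0 lev5) => //.
    by rewrite s1 size_map.
set L6 := take 6 L0.
have sL6 : size L6 = 6%N by rewrite size_takel // sL0.
have lev6 : forall i, i \in L6 -> (r i %% d = 0)%N by move=> i /mem_take; apply: lev0.
have uL6 : uniq (L6 ++ [::]) by rewrite cats0; apply: take_uniq.
move: sL6 lev6 uL6; case: L6 => [|x rest] //= [sr] lev6 uL6.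
have un6 := units_co hu lev6.
have sr' : size (map cf rest) = 5%N by rewrite size_map.
have [es [[s1 s2 s3] h]] := Fact6 (x := cf x) (us := map cf rest) un6 sr'.
apply: (realize_pre (es1 := es) (L1 := x :: rest) (es2 := [::]) dE om hu hdec p0 uL6 lev6) => //.
  by rewrite s1 /= size_map.
Qed.
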